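(* Let $\mathcal{E}:\mathbb{R}^N\to\mathbb{R}^F$ and $\mathcal{D}:\mathbb{R}^F\to\mathbb{R}^N$ be maps, let $0<\alpha<1$, $\lambda>0$, $\beta>0$, let $\rho$ be a real number with $0<\rho<2\beta$, and let ${\bm x}\in\mathbb{R}^N$. Assume $\mathcal{T}:\mathbb{R}^F\to\mathbb{R}^F$, $\mathcal{T}(\cdot)=\mathcal{E}(\mathcal{D}(\cdot))-\mathcal{E}({\bm x})$, is continuous. Let sequences $({\bm z}^k)$ and $({\bm y}^k)$ in $\mathbb{R}^F$ satisfy, for $k=0,1,\dots$ (with given starting points ${\bm z}^{-1},{\bm z}^0$), $$ {\bm y}^k={\bm z}^k+\alpha({\bm z}^k-{\bm z}^{k-1}),\qquad {\bm z}^{k+1}={\bm y}^k-2\lambda\beta\,\mathcal{T}{\bm y}^k. $$ Assume ${\bm z}^\star\in\mathbb{R}^F$ satisfies $\mathcal{T}{\bm z}^\star=0$ and $\langle \mathcal{T}{\bm y}^k,{\bm y}^k-{\bm z}^\star\rangle\ge\beta\|\mathcal{T}{\bm y}^k\|^2$ for $k=0,1,\dots$. Set $\nu=\lambda^{-1}-1$, $\delta^k=\nu(1-\alpha)\|{\bm z}^k-{\bm z}^{k-1}\|^2$ and $\Delta^k({\bm z}^\star)=\|{\bm z}^k-{\bm z}^\star\|^2-\|{\bm z}^{k-1}-{\bm z}^\star\|^2$. Then for $k=1,2,\dots$, $$\Delta^{k+1}({\bm z}^\star)+\delta^{k+1}+\nu\alpha\|{\bm z}^{k+1}-2{\bm z}^k+{\bm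 z}^{k-1}\|^2\ \le\ \alpha\,\Delta^k({\bm z}^\star)+\big[\alpha(1+\alpha)+\nu\alpha(1-\alpha)\big]\|{\bm z}^k-{\bm z}^{k-1}\|^2.$$
   Context: $\langle\cdot,\cdot\rangle$ and $\|\cdot\|$ denote the Euclidean inner product and norm on $\mathbb{R}^F$. The maps $\mathcal{E}$ and $\mathcal{D}$ are arbitrary maps between the indicated spaces. *)

(* Defs.v *)
From HB Require Import structures.
From mathcomp Require Import all_boot all_order all_algebra.
From mathcomp Require Import all_classical all_reals all_analysis.
Set Implicit Arguments. Unset Strict Implicit. Unset Printing Implicit Defensive.
Import Order.TTheory GRing.Theory Num.Theory.
Import numFieldNormedType.Exports.
Local Open Scope ring_scope.

Definition dotp (R : realType) (n : nat) (u v : 'rV[R]_n) : R :=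
  \sum_(i < n) u 0 i * v 0 i.

Definition enorm (R : realType) (n : nat) (v : 'rV[R]_n) : R :=
  Num.sqrt (dotp v v).

(* Main.v *)
Require Import Defs.
From HB Require Import structures.
From mathcomp Require Import all_boot all_order all_algebra.
From mathcomp Require Import all_classical all_reals all_analysis.
From mathcomp Require Import ring lra.
Import Order.TTheory GRing.Theory Num.Theory.
Import numFieldNormedType.Exports.
Local Open Scope ring_scope.

Section Dot.
Variables (R : realType) (n : nat).
Implicit Types u v w : 'rV[R]_n.
Lemma dotpC u v : dotp u v = dotp v u.
Proof. by apply: eq_bigr => i _; rewrite mulrC. Qed.
Lemma dotpDl u v w : dotp (u + v) w = dotp u w + dotp v w.
Proof. by rewrite /dotp -big_split; apply: eq_bigr => i _; rewrite !mxE mulrDl. Qed.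
Lemma dotpNl u w : dotp (- u) w = - dotp u w.
Proof. by rewrite /dotp -sumrN; apply: eq_bigr => i _; rewrite !mxE mulNr. Qed.
Lemma dotpZl a u w : dotp (a *: u) w = a * dotp u w.
Proof. by rewrite /dotp mulr_sumr; apply: eq_bigr => i _; rewrite !mxE mulrA. Qed.
Lemma dotpDr u v w : dotp w (u + v) = dotp w u + dotp w v.
Proof. by rewrite dotpC dotpDl !(dotpC w). Qed.
Lemma dotpNr u w : dotp w (- u) = - dotp w u.
Proof. by rewrite dotpC dotpNl dotpC. Qed.
Lemma dotpZr a u w : dotp w (a *: u) = a * dotp w u.
Proof. by rewrite dotpC dotpZl dotpC. Qed.
Lemma dotp_ge0 u : 0 <= dotp u u.
Proof. by apply: sumr_ge0 => i _; rewrite -expr2 sqr_ge0. Qed.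
Lemma enorm2 u : enorm u ^+ 2 = dotp u u.
Proof. by rewrite /enorm sqr_sqrtr // dotp_ge0. Qed.

Definition dexp := (dotpDl, dotpNl, dotpZl, dotpDr, dotpNr, dotpZr).

Lemma L1 (al : R) (b c s : 'rV[R]_n) :
  enorm (b + al *: (b - c) - s) ^+ 2 =
  (1 + al) * enorm (b - s) ^+ 2 - al * enorm (c - s) ^+ 2
  + al * (1 + al) * enorm (b - c) ^+ 2.
Proof.
rewrite !enorm2 !dexp ?(dotpC c b) ?(dotpC s b) ?(dotpC s c); ring.
Qed.

Lemma L2 (al : R) (a b c : 'rV[R]_n) :
  enorm (b + al *: (b - c) - a) ^+ 2 =
  al * enorm (a - 2%:R *: b + c) ^+ 2 + (1 - al) * enorm (a - b) ^+ 2
  - al * (1 - al) * enorm (b - c) ^+ 2.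
Proof.
rewrite !enorm2 !dexp ?(dotpC c b) ?(dotpC a b) ?(dotpC a c) ?(dotpC b a) ?(dotpC c a); ring.
Qed.
Lemma L0 (g : R) (V T : 'rV[R]_n) :
  enorm (V - g *: T) ^+ 2 = enorm V ^+ 2 - 2 * g * dotp T V + g ^+ 2 * enorm T ^+ 2.
Proof. rewrite !enorm2 !dexp (dotpC V T); ring. Qed.
Lemma L0' (g : R) (T : 'rV[R]_n) : enorm (g *: T) ^+ 2 = g ^+ 2 * enorm T ^+ 2.
Proof. rewrite !enorm2 !dexp; ring. Qed.
End Dot.

Theorem lemmaS1 (R : realType) (N F : nat)
  (E : 'rV[R]_N -> 'rV[R]_F) (D : 'rV[R]_F -> 'rV[R]_N)
  (alpha lambda beta rho : R) (x : 'rV[R]_N)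
  (halpha : 0 < alpha < 1) (hlambda : 0 < lambda) (hbeta : 0 < beta)
  (hrho : 0 < rho < 2 * beta)
  (hT : continuous (fun v : 'rV[R]_F => E (D v) - E x))
  (zm1 : 'rV[R]_F) (z y : nat -> 'rV[R]_F)
  (hy0 : y 0%N = z 0%N + alpha *: (z 0%N - zm1))
  (hy : forall k : nat, y k.+1 = z k.+1 + alpha *: (z k.+1 - z k))
  (hz : forall k : nat,
      z k.+1 = y k - (2 * lambda * beta) *: (E (D (y k)) - E x))
  (zstar : 'rV[R]_F)
  (hzstar : E (D zstar) - E x = 0)
  (hmono : forall k : nat,
      dotp (E (D (y k)) - E x) (y k - zstar)
        >= beta * enorm (E (D (y k)) - E x) ^+ 2) :
  let nu := lambda^-1 - 1 in
  forall k : nat, (1 <= k)%N ->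
    (enorm (z k.+1 - zstar) ^+ 2 - enorm (z k - zstar) ^+ 2)
    + nu * (1 - alpha) * enorm (z k.+1 - z k) ^+ 2
    + nu * alpha * enorm (z k.+1 - 2%:R *: z k + z k.-1) ^+ 2
    <= alpha * (enorm (z k - zstar) ^+ 2 - enorm (z k.-1 - zstar) ^+ 2)
       + (alpha * (1 + alpha) + nu * alpha * (1 - alpha))
         * enorm (z k - z k.-1) ^+ 2.
Proof.
move=> nu k hk; case: k hk => // m _ /=.
set b := z m.+1; set c := z m; set s := zstar.
set t := E (D (y m.+1)) - E x.
set g := 2 * lambda * beta.
have hym : y m.+1 = b + alpha *: (b - c) by rewrite hy.
have ha : z m.+2 = y m.+1 - g *: t by rewrite hz.
have hg : 0 < g by rewrite mulr_gt0 // mulr_gt0.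
have Hm := hmono m.+1; rewrite -/t in Hm.
have S1 : enorm (z m.+2 - s) ^+ 2 <= enorm (y m.+1 - s) ^+ 2
            - nu * enorm (y m.+1 - z m.+2) ^+ 2.
  have -> : y m.+1 - z m.+2 = g *: t by rewrite ha opprB addrC subrK.
  have -> : z m.+2 - s = (y m.+1 - s) - g *: t by rewrite ha addrAC.
  rewrite L0 L0'.
  have hl : lambda != 0 by rewrite gt_eqF.
  set P := dotp t _ in Hm *; set Q := enorm t ^+ 2 in Hm *; set Y := enorm _ ^+ 2.
  rewrite -subr_ge0.
  have -> : Y - nu * (g ^+ 2 * Q) - (Y - 2 * g * P + g ^+ 2 * Q) = 2 * g * (P - beta * Q).
    by rewrite /nu /g; field.
  by apply: mulr_ge0; [apply: mulr_ge0 => //; apply: ltW | rewrite subr_ge0].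
rewrite hym in S1; rewrite L1 L2 in S1.
rewrite -subr_ge0; move: S1; rewrite -subr_ge0 => S1.
set A := enorm _ ^+ 2 in S1 *.
set B := enorm (b - s) ^+ 2 in S1 *.
set C := enorm (c - s) ^+ 2 in S1 *.
set W := enorm (b - c) ^+ 2 in S1 *.
set U := enorm (z m.+2 - b) ^+ 2 in S1 *.
set U2 := enorm (z m.+2 - 2%:R *: b + c) ^+ 2 in S1 *.
set Z := enorm (z m.+2 - s) ^+ 2 in S1 *.
move: S1; clearbody A B C W U U2 Z nu; clear -A => S1.
apply: (le_trans S1); rewrite le_eqVlt; apply/orP; left; apply/eqP; ring.
Qed.
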